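(* Let $X \in \mathbb{R}^{d\times n}$, $V_0, V_T \in \mathbb{R}^{m\times k}$, $W_0, W_T \in \mathbb{R}^{k\times d}$, and suppose $Y = V_T W_T X$ and $V_0 W_0 X \neq Y$. Define $\mathbf{z}(\alpha) = (V_0 + \alpha D_1)(W_0 + \alpha D_2)X$ for $\alpha\in[0,1]$, where $D_1 = V_T - V_0$ and $D_2 = W_T - W_0$, and let $\mathcal{L}(\alpha) = \frac{1}{2n}\Vert \mathbf{z}(\alpha) - Y\Vert_F^2$. If $\langle \mathbf{z}'(0), \mathbf{z}'(1)\rangle_F > 0$, where $\mathbf{z}'(0) = (D_1 W_0 + V_0 D_2)X$ and $\mathbf{z}'(1) = (D_1 W_T + V_T D_2)X$, then $\mathbf{z}'(\alpha)\neq 0$ for all $\alpha\in[0,1]$, the Gauss length of $\mathbf{z}$ is less than $\pi/2$, and $\alpha\mapsto\mathcal{L}(\alpha)$ is monotonically decreasing (non-increasing) on $[0,1]$.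
   Context: $\langle A, B\rangle_F = \operatorname{tr}(A^\top B)$ is the Frobenius inner product, and matrices in $\mathbb{R}^{m\times n}$ are identified with vectors in $\mathbb{R}^{mn}$. For a smooth curve $\mathbf{z}$ with nonvanishing derivative, let $\hat{\mathbf{v}}(\alpha) = \partial_\alpha \mathbf{z}(\alpha)/\Vert \partial_\alpha \mathbf{z}(\alpha)\Vert$; the Gauss length of $\mathbf{z}$ is $\int_0^1 \Vert \partial_\alpha \hat{\mathbf{v}}(\alpha)\Vert\, d\alpha$. Note $\mathbf{z}'(\alpha) = (D_1W_0 + V_0D_2 + 2\alpha D_1D_2)X$ is affine in $\alpha$. *)

(* Defs.v *)
From HB Require Import structures.
From mathcomp Require Import all_boot all_order all_algebra.
From mathcomp Require Import all_classical all_reals all_analysis.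
Set Implicit Arguments. Unset Strict Implicit. Unset Printing Implicit Defensive.
Import Order.TTheory GRing.Theory Num.Theory.
Import numFieldNormedType.Exports.
Local Open Scope ring_scope.
Local Open Scope classical_set_scope.

Section Defs.
Variable R : realType.

Definition frobI (p q : nat) (A B : 'M[R]_(p, q)) : R := \tr (A^T *m B).
Definition frobN (p q : nat) (A : 'M[R]_(p, q)) : R := Num.sqrt (frobI A A).

Definition zcurve (d n m k : nat) (X : 'M[R]_(d, n)) (V0 VT : 'M[R]_(m, k))
  (W0 WT : 'M[R]_(k, d)) (a : R) : 'M[R]_(m, n) :=
  (V0 + a *: (VT - V0)) *m (W0 + a *: (WT - W0)) *m X.

Definition lossL (d n m k : nat) (X : 'M[R]_(d, n)) (Y : 'M[R]_(m, n))
  (V0 VT : 'M[R]_(m, k)) (W0 WT : 'M[R]_(k, d)) (a : R) : R :=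
  ((2 * n)%:R)^-1 * frobN (zcurve X V0 VT W0 WT a - Y) ^+ 2.

Definition unit_tangent (p q : nat) (z : R -> 'M[R]_(p, q)) (a : R) : 'M[R]_(p, q) :=
  (frobN (derive1 z a))^-1 *: derive1 z a.

Definition gauss_length (p q : nat) (z : R -> 'M[R]_(p, q)) : \bar R :=
  \int[lebesgue_measure]_(a in `[(0:R), 1]) (frobN (derive1 (unit_tangent z) a))%:E.

End Defs.

(* Main.v *)
Require Import Defs.
From HB Require Import structures.
From mathcomp Require Import all_boot all_order all_algebra.
From mathcomp Require Import all_classical all_reals all_analysis.
From mathcomp Require Import ring lra.
Import Order.TTheory GRing.Theory Num.Theory.
Import numFieldNormedType.Exports.
Local Open Scope ring_scope.
Local Open Scope classical_set_scope.

Section Frob.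
Variable R : realType.
Variables p q : nat.
Implicit Types A B C : 'M[R]_(p, q).

Lemma frobIDl A B C : frobI (A + B) C = frobI A C + frobI B C.
Proof. by rewrite /frobI linearD /= mulmxDl mxtraceD. Qed.
Lemma frobIZl k A B : frobI (k *: A) B = k * frobI A B.
Proof. by rewrite /frobI linearZ /= -scalemxAl mxtraceZ. Qed.
Lemma frobIC A B : frobI A B = frobI B A.
Proof. by rewrite /frobI -mxtrace_tr trmx_mul trmxK. Qed.
Lemma frobIDr A B C : frobI A (B + C) = frobI A B + frobI A C.
Proof. by rewrite frobIC frobIDl !(frobIC A). Qed.
Lemma frobIZr k A B : frobI A (k *: B) = k * frobI A B.
Proof. by rewrite frobIC frobIZl frobIC. Qed.
Lemma frobI_sum A : frobI A A = \sum_i \sum_j A j i ^+ 2.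
Proof. by rewrite /frobI /mxtrace; apply: eq_bigr => i _; rewrite mxE; apply: eq_bigr => j _; rewrite mxE expr2. Qed.
Lemma frobI_ge0 A : 0 <= frobI A A.
Proof. by rewrite frobI_sum; apply: sumr_ge0 => i _; apply: sumr_ge0 => j _; apply: sqr_ge0. Qed.
Lemma frobI_eq0 A : frobI A A = 0 -> A = 0.
Proof.
rewrite frobI_sum => H.
have H1 := psumr_eq0P (fun i _ => sumr_ge0 _ (fun j _ => sqr_ge0 (A j i))) H.
apply/matrixP => j i; rewrite mxE.
have H2 := psumr_eq0P (fun j _ => sqr_ge0 (A j i)) (H1 i isT).
by apply/eqP; rewrite -sqrf_eq0 H2.
Qed.
Lemma frobI0l A : frobI 0 A = 0.
Proof. by rewrite -(scale0r 0) frobIZl mul0r. Qed.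
Lemma frobI_comb a b c e (u v : 'M[R]_(p, q)) :
  frobI (a *: u + b *: v) (c *: u + e *: v) =
  a * c * frobI u u + (a * e + b * c) * frobI u v + b * e * frobI v v.
Proof.
rewrite !frobIDl !frobIDr !frobIZl !frobIZr (frobIC v u); ring.
Qed.
End Frob.
Lemma derive1_comb (R : realType) (p q : nat) (g h : R -> R) (g' h' a : R)
  (c u v : 'M[R]_(p, q)) :
  is_derive a 1 g g' -> is_derive a 1 h h' ->
  derive1 (fun t => c + g t *: u + h t *: v) a = g' *: u + h' *: v.
Proof.
move=> dg dh.
have E i j : (fun t => (c + g t *: u + h t *: v) i j) =
   (fun t => (fun _ => c i j) t + (u i j *: g) t + (v i j *: h) t).
  by apply/funext => t; rewrite !mxE /= (mulrC (g t)) (mulrC (h t)).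
have D i j : is_derive a 1 (fun t => (c + g t *: u + h t *: v) i j)
    (u i j * g' + v i j * h').
  rewrite E; apply: is_derive_eq.
  by rewrite add0r mul1r.
have der : derivable (fun t => c + g t *: u + h t *: v) a 1.
  by apply/derivable_mxP => i j; case: (D i j).
rewrite derive1E derive_mx //; apply/matrixP => i j.
by rewrite !mxE derive_val mulrC [v i j * _]mulrC.
Qed.

Lemma zcurve_poly (R : realType) (d n m k : nat)
  (X : 'M[R]_(d, n)) (V0 VT : 'M[R]_(m, k)) (W0 WT : 'M[R]_(k, d)) :
  zcurve X V0 VT W0 WT = fun t => V0 *m W0 *m X +
     t *: (((VT - V0) *m W0 + V0 *m (WT - W0)) *m X) +
     t ^+ 2 *: ((VT - V0) *m (WT - W0) *m X).
Proof.
apply/funext => t; rewrite /zcurve; move: (VT - V0) (WT - W0) => D1 D2.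
rewrite !mulmxDl !mulmxDr !mulmxDl -!scalemxAl -!scalemxAr -!scalemxAl.
rewrite !scalerDr !scalerA -expr2.
rewrite -!addrA; congr (_ + _); exact: addrCA.
Qed.

Lemma vE_lem (R : realType) (d n m k : nat)
  (X : 'M[R]_(d, n)) (V0 VT : 'M[R]_(m, k)) (W0 WT : 'M[R]_(k, d)) :
  ((VT - V0) *m WT + VT *m (WT - W0)) *m X =
  ((VT - V0) *m W0 + V0 *m (WT - W0)) *m X + 2 *: ((VT - V0) *m (WT - W0) *m X).
Proof.
set D1 := VT - V0; set D2 := WT - W0.
have -> : WT = W0 + D2 by rewrite /D2 addrC subrK.
have -> : VT = V0 + D1 by rewrite /D1 addrC subrK.
move: D1 D2 => D1 D2.
by rewrite mulmxDr mulmxDl !mulmxDl scaler_nat mulr2n addrACA.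
Qed.

Lemma dz_lem (R : realType) (d n m k : nat)
  (X : 'M[R]_(d, n)) (V0 VT : 'M[R]_(m, k)) (W0 WT : 'M[R]_(k, d)) :
  derive1 (zcurve X V0 VT W0 WT) = fun t =>
    (1 - t) *: (((VT - V0) *m W0 + V0 *m (WT - W0)) *m X) +
    t *: (((VT - V0) *m WT + VT *m (WT - W0)) *m X).
Proof.
apply/funext => t; rewrite zcurve_poly vE_lem.
have dg : is_derive t 1 (fun x : R => x) 1 by exact: is_derive_id.
have dh : is_derive t 1 (fun x : R => x ^+ 2) (2 * t).
  apply: DeriveDef; first exact: exprn_derivable.
  by rewrite exp_derive /= expr1; exact: mulr1.
rewrite (@derive1_comb _ _ _ _ _ _ _ _ _ _ _ dg dh).
set u := (X in 1 *: X); set P := (X in (2 * t) *: X).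
by rewrite scalerDr !scalerA scalerBl scale1r mulrC -/u -/P addrA subrK.
Qed.

Lemma derive1_comb0 (R : realType) (p q : nat) (g h : R -> R) (g' h' a : R)
  (u v : 'M[R]_(p, q)) :
  is_derive a 1 g g' -> is_derive a 1 h h' ->
  derive1 (fun t => g t *: u + h t *: v) a = g' *: u + h' *: v.
Proof.
move=> dg dh.
have -> : (fun t => g t *: u + h t *: v) = (fun t => 0 + g t *: u + h t *: v).
  by apply/funext => t; rewrite add0r.
exact: derive1_comb.
Qed.

Section Isd.
Variable R : realType.
Implicit Types (f g : R -> R) (a b c t : R).

Lemma isdC c t : is_derive t 1 (fun _ => c) 0.
Proof. exact: is_derive_cst. Qed.
Lemma isdid t : is_derive t 1 (fun x => x) 1.
Proof. exact: is_derive_id. Qed.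
Lemma isdD f g a b t : is_derive t 1 f a -> is_derive t 1 g b ->
  is_derive t 1 (fun x => f x + g x) (a + b).
Proof. move=> df dg; exact: is_deriveD. Qed.
Lemma isdB f g a b t : is_derive t 1 f a -> is_derive t 1 g b ->
  is_derive t 1 (fun x => f x - g x) (a - b).
Proof. move=> df dg; exact: is_deriveB. Qed.
Lemma isdM f g a b t : is_derive t 1 f a -> is_derive t 1 g b ->
  is_derive t 1 (fun x => f x * g x) (f t * b + g t * a).
Proof. move=> df dg; exact: is_deriveM. Qed.
Lemma isdV f a t : f t != 0 -> is_derive t 1 f a ->
  is_derive t 1 (fun x => (f x)^-1) (- a / f t ^+ 2).
Proof.
move=> ft df; have H := is_deriveV ft df.
apply: is_derive_eq H _.
by change (- (f t ^- 2) * a = - a / f t ^+ 2); rewrite mulNr mulrC mulNr.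
Qed.
Lemma isdsqrt f a t : 0 < f t -> is_derive t 1 f a ->
  is_derive t 1 (fun x => Num.sqrt (f x)) (a / (2 * Num.sqrt (f t))).
Proof.
move=> ft df.
have := is_derive1_comp (is_derive1_sqrt ft) df.
by rewrite mulrC.
Qed.
Lemma isdatan f a t : is_derive t 1 f a ->
  is_derive t 1 (fun x => atan (f x)) (a / (1 + f t ^+ 2)).
Proof.
move=> df.
have := is_derive1_comp (is_derive1_atan (f t)) df.
by rewrite mulrC.
Qed.
End Isd.
Arguments isdC {R}. Arguments isdid {R}.
Arguments isdD {R f g a b t}. Arguments isdB {R f g a b t}. Arguments isdM {R f g a b t}.
Arguments isdV {R f a t}. Arguments isdsqrt {R f a t}. Arguments isdatan {R f a t}.

Ltac isd := repeat first [ apply: isdC | apply: isdid | apply: isdB | apply: isdD | apply: isdM ].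


Lemma isd_cont (R : realType) (f : R -> R) (a x : R) : is_derive x 1 f a -> {for x, continuous f}.
Proof. by case=> df _; apply/differentiable_continuous/derivable1_diffP. Qed.

Arguments isd_cont {R f a x}.

Lemma key_alg (R : realType) (pp rr qq t S : R) : S != 0 ->
  S ^+ 2 = (1 - t) * (1 - t) * pp + ((1 - t) * t + t * (1 - t)) * rr + t * t * qq ->
  let Qt := (1 - t) * (1 - t) * pp + ((1 - t) * t + t * (1 - t)) * rr + t * t * qq in
  let Qd := 2 * ((t - 1) * pp + (1 - 2 * t) * rr + t * qq) in
  let al := (1 - t) * (- (Qd / (2 * S)) / S ^+ 2) + S^-1 * (0 - 1) in
  let be := t * (- (Qd / (2 * S)) / S ^+ 2) + S^-1 * 1 in
  al * al * pp + (al * be + be * al) * rr + be * be * qq = (pp * qq - rr ^+ 2) / Qt ^+ 2.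
Proof.
move=> S0 SQ Qt Qd al be.
have Qt0 : Qt != 0 by rewrite /Qt -SQ expf_neq0.
have SS : S^-1 * S^-1 = Qt^-1 by rewrite -invfM -expr2 SQ.
have -> : al = S^-1 * (- 1 - (1 - t) * Qd / (2 * Qt)).
 by rewrite /al SQ -/Qt; field; rewrite Qt0 S0.
have -> : be = S^-1 * (1 - t * Qd / (2 * Qt)) by rewrite /be SQ -/Qt; field; rewrite Qt0 S0.
set A := (- 1 - (1 - t) * Qd / (2 * Qt)); set B := 1 - t * Qd / (2 * Qt).
have -> : S^-1 * A * (S^-1 * A) * pp + (S^-1 * A * (S^-1 * B) + S^-1 * B * (S^-1 * A)) * rr + S^-1 * B * (S^-1 * B) * qq = (S^-1 * S^-1) * (A * A * pp + (A * B + B * A) * rr + B * B * qq) by ring.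
by rewrite SS /A /B /Qd; move: Qt0; rewrite /Qt => Qt0; field.
Qed.

Arguments key_alg {R pp rr qq t S}.

Lemma key2 (R : realType) (x sD pp rr qq : R) :
  sD ^+ 2 = pp * qq - rr ^+ 2 -> pp != 0 ->
  let L := pp + x * (rr - pp) in
  let Q := (1 - x) * (1 - x) * pp + ((1 - x) * x + x * (1 - x)) * rr + x * x * qq in
  L != 0 -> Q != 0 ->
  ((x * sD) * (- (rr - pp) / L ^+ 2) + L^-1 * (x * 0 + sD * 1)) / (1 + (x * sD * L^-1) ^+ 2)
   = sD / Q.
Proof.
move=> hsD pp0 L Q L0 Q0.
have e1 : 1 + (x * sD * L^-1) ^+ 2 = (L ^+ 2 + x ^+ 2 * sD ^+ 2) / L ^+ 2.
  by field.
have e2 : L ^+ 2 + x ^+ 2 * sD ^+ 2 = pp * Q by rewrite hsD /L /Q; ring.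
rewrite e1 e2.
move: L0 Q0; rewrite /L /Q => L0 Q0; field.
by rewrite L0 Q0 pp0.
Qed.

Lemma comb_id (R : realType) (m n : nat) (c u P : 'M[R]_(m, n)) (t : R) :
  c + t *: u + t ^+ 2 *: P - (c + u + P) =
  (- ((1 - t) ^+ 2 / 2)) *: u + (- ((1 - t) * (1 + t) / 2)) *: (u + 2 *: P).
Proof. apply/matrixP => i j; rewrite !mxE; by field. Qed.

Lemma itv01 (R : realType) (t : R) : (t \in `[0, 1]) = (0 <= t <= 1).
Proof. by rewrite mem_setE in_itv. Qed.

Arguments key2 {R x sD pp rr qq}.
Arguments derive1_comb0 {R p q g h g' h' a u v}.

Theorem mainTheorem4 (R : realType) (d n m k : nat)
  (X : 'M[R]_(d, n)) (V0 VT : 'M[R]_(m, k)) (W0 WT : 'M[R]_(k, d))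
  (Y : 'M[R]_(m, n)) :
  Y = VT *m WT *m X ->
  V0 *m W0 *m X != Y ->
  0 < frobI (((VT - V0) *m W0 + V0 *m (WT - W0)) *m X)
            (((VT - V0) *m WT + VT *m (WT - W0)) *m X) ->
  [/\ (forall a : R, a \in `[0, 1] -> derive1 (zcurve X V0 VT W0 WT) a != 0),
      (gauss_length (zcurve X V0 VT W0 WT) < (pi / 2)%:E)%E
    & (forall a b : R, a \in `[0, 1] -> b \in `[0, 1] -> a <= b ->
         lossL X Y V0 VT W0 WT b <= lossL X Y V0 VT W0 WT a)].
Proof.
move=> HY _ Hr.
have dzE := @dz_lem R d n m k X V0 VT W0 WT.
have zE := @zcurve_poly R d n m k X V0 VT W0 WT.
have vE := @vE_lem R d n m k X V0 VT W0 WT.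
move: dzE zE vE Hr.
set u := ((VT - V0) *m W0 + V0 *m (WT - W0)) *m X.
set v := ((VT - V0) *m WT + VT *m (WT - W0)) *m X.
set P := (VT - V0) *m (WT - W0) *m X.
move=> dzE zE vE Hr.
set pp := frobI u u; set rr := frobI u v; set qq := frobI v v.
have pp_gt0 : 0 < pp.
  rewrite lt_neqAle frobI_ge0 andbT; apply/eqP => /esym/frobI_eq0 u0.
  by move: Hr; rewrite /rr u0 frobI0l ltxx.
have qq_gt0 : 0 < qq.
  rewrite lt_neqAle frobI_ge0 andbT; apply/eqP => /esym/frobI_eq0 v0.
  by move: Hr; rewrite /rr frobIC v0 frobI0l ltxx.
pose Q t := (1 - t) * (1 - t) * pp + ((1 - t) * t + t * (1 - t)) * rr + t * t * qq.
have QE t : frobI (derive1 (zcurve X V0 VT W0 WT) t) (derive1 (zcurve X V0 VT W0 WT) t) = Q t.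
  by rewrite dzE frobI_comb.
have Qpos t : t \in `[0, 1] -> 0 < Q t.
  rewrite itv01 => /andP[t0 t1]; rewrite /Q.
  have h1 : 0 <= (1 - t) * t by apply: mulr_ge0; lra.
  have h2 : 0 < (1 - t) * (1 - t) * pp + t * t * qq.
    move: t1; rewrite le_eqVlt => /orP[/eqP->|t1].
      by rewrite subrr !mul0r add0r !mul1r.
    have a1 : 0 < (1 - t) * (1 - t) * pp by rewrite !mulr_gt0 // subr_gt0.
    have a2 : 0 <= t * t * qq by rewrite !mulr_ge0 // ltW.
    lra.
  have h3 : 0 <= ((1 - t) * t + t * (1 - t)) * rr by apply: mulr_ge0; [lra| exact: ltW].
  lra.
split.
- move=> a a01; apply/eqP => H0; have := QE a; rewrite H0 frobI0l => /esym Q0.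
  by have := Qpos a a01; rewrite Q0 ltxx.
-
  have D_ge0 : 0 <= pp * qq - rr ^+ 2.
    suff : 0 <= pp * (pp * qq - rr ^+ 2) by rewrite pmulr_rge0.
    have := @frobI_ge0 _ _ _ (rr *: u + (- pp) *: v); rewrite frobI_comb -/pp -/rr -/qq.
    by move=> h; apply: (le_trans h); rewrite le_eqVlt; apply/orP; left; apply/eqP; ring.
  set sD := Num.sqrt (pp * qq - rr ^+ 2).
  have hsD : sD ^+ 2 = pp * qq - rr ^+ 2 by rewrite sqr_sqrtr.
  have sD0 : 0 <= sD by rewrite sqrtr_ge0.
  have TE : unit_tangent (zcurve X V0 VT W0 WT) = fun t =>
      ((1 - t) * (Num.sqrt (Q t))^-1) *: u + (t * (Num.sqrt (Q t))^-1) *: v.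
    apply/funext => t; rewrite /unit_tangent dzE /frobN frobI_comb -/pp -/rr -/qq.
    by rewrite scalerDr !scalerA; congr (_ *: _ + _ *: _); rewrite mulrC.
  have intE : {in `[(0:R), 1], (fun a => (frobN (derive1 (unit_tangent (zcurve X V0 VT W0 WT)) a))%:E)
      =1 (fun a => (sD / Q a)%:E)}.
    move=> t t01; congr (_%:E); rewrite TE.
    have Qt := Qpos t t01.
    set S := Num.sqrt (Q t).
    have S0 : S != 0 by rewrite /S lt0r_neq0 // sqrtr_gt0.
    have SQ : S ^+ 2 = Q t by rewrite sqr_sqrtr // ltW.
    pose Qd := 2 * ((t - 1) * pp + (1 - 2 * t) * rr + t * qq).
    have dQ : is_derive t 1 Q Qd.
      apply: is_derive_eq; rewrite /Q; isd.
      by rewrite /GRing.scale /= /Qd; ring.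
    have dS := isdsqrt Qt dQ.
    have dSi := isdV (f := fun x => Num.sqrt (Q x)) S0 dS.
    have dal := isdM (isdB (isdC 1 t) (isdid t)) dSi.
    have dbe := isdM (isdid t) dSi.
    rewrite (derive1_comb0 dal dbe) /frobN frobI_comb -/pp -/rr -/qq -/S.
    rewrite (key_alg S0 SQ) -/(Q t).
    rewrite sqrtrM // sqrtrV ?exprn_ge0 ?(ltW Qt) // sqrtr_sqr ger0_norm ?(ltW Qt) //.
  have Lpos x : x \in `[(0:R), 1] -> 0 < pp + x * (rr - pp).
    rewrite itv01 => /andP[x0 x1].
    have -> : pp + x * (rr - pp) = (1 - x) * pp + x * rr by ring.
    move: x1; rewrite le_eqVlt => /orP[/eqP->|x1].
      by rewrite subrr mul0r add0r mul1r.
    have a1 : 0 < (1 - x) * pp by rewrite mulr_gt0 // subr_gt0.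
    have a2 : 0 <= x * rr by rewrite mulr_ge0 // ltW.
    lra.
  pose H x := atan (x * sD * (pp + x * (rr - pp))^-1).
  have dH x : x \in `[(0:R), 1] -> is_derive x 1 H (sD / Q x).
    move=> x01; have L0 := lt0r_neq0 (Lpos x x01).
    have dL : is_derive x 1 (fun y => pp + y * (rr - pp)) (rr - pp).
      apply: is_derive_eq; isd.
      by rewrite /GRing.scale /=; ring.
    have dg := isdM (isdM (isdid x) (isdC sD x)) (isdV (f := fun y => pp + y * (rr - pp)) L0 dL).
    have h := isdatan dg; apply: (is_derive_eq h).
    rewrite (key2 (qq:=qq) hsD (lt0r_neq0 pp_gt0) L0) //.
    exact: lt0r_neq0 (Qpos x x01).
  have dQf x : x \in `[(0:R), 1] -> is_derive x 1 (fun y => sD / Q y) (sD * (- (2 * ((x - 1) * pp + (1 - 2 * x) * rr + x * qq)) / Q x ^+ 2) + (Q x)^-1 * 0).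
    move=> x01.
    have dQ : is_derive x 1 Q (2 * ((x - 1) * pp + (1 - 2 * x) * rr + x * qq)).
      apply: is_derive_eq; rewrite /Q; isd.
      by rewrite /GRing.scale /=; ring.
    exact: isdM (isdC sD x) (isdV (lt0r_neq0 (Qpos x x01)) dQ).
  have i01 : (0:R) \in `[(0:R), 1] by rewrite itv01 ler01 lexx.
  have i11 : (1:R) \in `[(0:R), 1] by rewrite itv01 ler01 lexx.
  have ioo x : x \in `]0, 1[%R -> x \in `[(0:R), 1].
    by rewrite itv01 in_itv /= => /andP[a b]; rewrite ltW // ltW.
  have -> : gauss_length (zcurve X V0 VT W0 WT) = (\int[lebesgue_measure]_(x in `[0%R, 1%R]) ((sD / Q x)%R)%:E)%E by apply: eq_integral.
  rewrite (@continuous_FTC2 R (fun a => sD / Q a) H 0%R 1%R) //.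
  + rewrite /H mul0r mul0r atan0 -EFinB subr0 lte_fin; exact: atan_ltpi2.
  + apply: continuous_in_subspaceT => x x01; exact: isd_cont (dQf x x01).
  + split.
    * by move=> x /ioo x01; case: (dH x x01).
    * apply: cvg_at_right_filter; exact: isd_cont (dH 0 i01).
    * apply: cvg_at_left_filter; exact: isd_cont (dH 1 i11).
  + move=> x /ioo x01; rewrite derive1E; by case: (dH x x01).
have YE : Y = V0 *m W0 *m X + u + P.
  have := congr1 (fun f => f 1) zE; rewrite /zcurve /= !scale1r expr1n.
  by rewrite scale1r [V0 + _]addrC [W0 + _]addrC !subrK HY => ->.
have diffE t : zcurve X V0 VT W0 WT t - Y =
    (- ((1 - t) ^+ 2 / 2)) *: u + (- ((1 - t) * (1 + t) / 2)) *: v.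
  by rewrite zE YE vE comb_id.
move=> a b; rewrite !itv01 => /andP[a0 a1] /andP[b0 b1] ab.
rewrite /lossL /frobN !sqr_sqrtr ?frobI_ge0 // !diffE !frobI_comb.
apply: ler_wpM2l; first by rewrite invr_ge0 ler0n.
set fa := 1 - a; set fb := 1 - b.
have hf : 0 <= fb <= fa by rewrite /fa /fb; apply/andP; split; lra.
have ga : 1 + a = 2 - fa by rewrite /fa; ring.
have gb : 1 + b = 2 - fb by rewrite /fb; ring.
rewrite ga gb.
have fa1 : fa <= 1 by rewrite /fa; lra.
have h2 : 0 < 2^-1 :> R by rewrite invr_gt0.
have s1 : fb ^+ 2 <= fa ^+ 2 by nra.
have s2 : fb * (2 - fb) <= fa * (2 - fa) by nra.
have s0 : 0 <= fb * (2 - fb) by nra.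
have s3 : 0 <= fb ^+ 2 by nra.
have t1 : fb ^+ 2 / 2 <= fa ^+ 2 / 2 by rewrite ler_wpM2r // ltW.
have t2 : fb * (2 - fb) / 2 <= fa * (2 - fa) / 2 by rewrite ler_wpM2r // ltW.
have t0 : 0 <= fb * (2 - fb) / 2 by rewrite mulr_ge0 // ltW.
have t3 : 0 <= fb ^+ 2 / 2 by rewrite mulr_ge0 // ltW.
have c1 : fb ^+ 2 / 2 * (fb ^+ 2 / 2) <= fa ^+ 2 / 2 * (fa ^+ 2 / 2) by apply: ler_pM.
have c2 : fb ^+ 2 / 2 * (fb * (2 - fb) / 2) <= fa ^+ 2 / 2 * (fa * (2 - fa) / 2) by apply: ler_pM.
have c3 : fb * (2 - fb) / 2 * (fb * (2 - fb) / 2) <= fa * (2 - fa) / 2 * (fa * (2 - fa) / 2) by apply: ler_pM.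
have := ler_wpM2r (ltW pp_gt0) c1.
have := ler_wpM2r (ltW Hr) c2.
have := ler_wpM2r (ltW qq_gt0) c3.
rewrite !mulrNN. lra.
Qed.
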